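(* Let $f:\mathbb{R}^n\to\mathbb{R}$ and let $U\subseteq\mathbb{R}^n$ be a nonempty open convex set. Suppose $f$ and $-f$ are prox-bounded with thresholds $\lambda_f,\lambda_{-f}>0$, and $0<1/L<\min\{\lambda_f,\lambda_{-f}\}$. Then the following are equivalent: (a) $\partial_p^{1/L}f(x)\ne\varnothing$ and $\partial_p^{1/L}(-f)(x)\ne\varnothing$ for all $x\in U$; (b) $\partial_F(Lj+f)(x)\ne\varnothing$ and $\partial_F(Lj-f)(x)\ne\varnothing$ for all $x\in U$; (c) $f$ is differentiable on $U$ and $|f(y)-f(x)-\langle\nabla f(x),y-x\rangle|\le\frac L2\|y-x\|^2$ for all $y\in\mathbb{R}^n$ and $x\in U$. When one of these holds, $\nabla f$ is $L$-Lipschitz on $U$.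
   Context: $j:=\frac12\|\cdot\|^2$. Prox-bounded with threshold $\lambda_f=\sup\{\lambda>0:\inf_y\{f(y)+\frac1{2\lambda}\|y-x\|^2\}>-\infty\text{ for some }x\}$. $v\in\partial_p^\lambda f(x)$ iff $f(y)\ge f(x)+\langle v,y-x\rangle-\frac1{2\lambda}\|y-x\|^2$ for all $y$. Fenchel subdifferential: $v\in\partial_F g(x)$ iff $g(y)\ge g(x)+\langle v,y-x\rangle$ for all $y$. *)

(* Defs.v *)
From HB Require Import structures.
From mathcomp Require Import all_boot all_order all_algebra.
From mathcomp Require Import all_classical all_reals all_analysis.
Set Implicit Arguments. Unset Strict Implicit. Unset Printing Implicit Defensive.
Import Order.TTheory GRing.Theory Num.Theory.
Import numFieldNormedType.Exports.
Local Open Scope classical_set_scope.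
Local Open Scope ring_scope.

Section Defs.
Variables (R : realType) (n : nat).
Implicit Types (x y v : 'rV[R]_n) (f g : 'rV[R]_n -> R).

Definition dotp x y : R := \sum_(i < n) x ord0 i * y ord0 i.
Definition enorm x : R := Num.sqrt (dotp x x).
Definition jhalf x : R := (dotp x x) / 2.

Definition prox_cond f (lam : R) : Prop :=
  exists x, exists m : R, forall y, m <= f y + (2 * lam)^-1 * dotp (y - x) (y - x).
Definition prox_bounded f : Prop := exists lam : R, 0 < lam /\ prox_cond f lam.
Definition prox_threshold f : \bar R :=
  ereal_sup [set (lam%:E)%E | lam in [set lam : R | 0 < lam /\ prox_cond f lam]].

Definition prox_subdiff (lam : R) f x : set 'rV[R]_n :=
  [set v | forall y, f x + dotp v (y - x) - (2 * lam)^-1 * dotp (y - x) (y - x) <= f y].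
Definition fenchel_subdiff g x : set 'rV[R]_n :=
  [set v | forall y, g x + dotp v (y - x) <= g y].

Definition convex_rV (U : set 'rV[R]_n) : Prop :=
  forall x y (t : R), U x -> U y -> 0 <= t -> t <= 1 -> U ((1 - t) *: x + t *: y).

Definition grad f x : 'rV[R]_n := \row_(i < n) ('d f x (delta_mx ord0 i : 'rV[R]_n)).

End Defs.

(* Main.v *)
Require Import Defs.
From HB Require Import structures.
From mathcomp Require Import all_boot all_order all_algebra.
From mathcomp Require Import all_classical all_reals all_analysis.
From mathcomp Require Import ring lra.
Import Order.TTheory GRing.Theory Num.Theory.
Import numFieldNormedType.Exports.
Local Open Scope classical_set_scope.
Local Open Scope ring_scope.

Set Implicit Arguments. Unset Strict Implicit.
Section Helpers.
Variables (R : realType) (n : nat).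
Implicit Types (x y z v w h : 'rV[R]_n).

Lemma dotpC x y : dotp x y = dotp y x.
Proof. by apply: eq_bigr => i _; rewrite mulrC. Qed.

Lemma dotpDl x y z : dotp (x + y) z = dotp x z + dotp y z.
Proof. by rewrite /dotp -big_split; apply: eq_bigr => i _; rewrite mxE mulrDl. Qed.

Lemma dotpZl (a : R) x z : dotp (a *: x) z = a * dotp x z.
Proof. by rewrite /dotp mulr_sumr; apply: eq_bigr => i _; rewrite mxE mulrA. Qed.

Lemma dotpNl x z : dotp (- x) z = - dotp x z.
Proof. by rewrite -scaleN1r dotpZl mulN1r. Qed.

Lemma dotpBl x y z : dotp (x - y) z = dotp x z - dotp y z.
Proof. by rewrite dotpDl dotpNl. Qed.

Lemma dotpDr x y z : dotp z (x + y) = dotp z x + dotp z y.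
Proof. by rewrite dotpC dotpDl !(dotpC z). Qed.

Lemma dotpZr (a : R) x z : dotp z (a *: x) = a * dotp z x.
Proof. by rewrite dotpC dotpZl dotpC. Qed.

Lemma dotpNr x z : dotp z (- x) = - dotp z x.
Proof. by rewrite dotpC dotpNl dotpC. Qed.

Lemma dotpBr x y z : dotp z (x - y) = dotp z x - dotp z y.
Proof. by rewrite dotpDr dotpNr. Qed.

Lemma dotp_ge0 x : 0 <= dotp x x.
Proof. by apply: sumr_ge0 => i _; rewrite -expr2 sqr_ge0. Qed.

Lemma dotp_eq0 x : dotp x x = 0 -> x = 0.
Proof.
move=> /eqP; rewrite psumr_eq0; last by move=> i _; rewrite -expr2 sqr_ge0.
move=> /allP H; apply/rowP => i; rewrite mxE.
have := H i (mem_index_enum i); rewrite implyTb mulf_eq0 orbb => /eqP.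
by rewrite [ord0]ord1.
Qed.

Lemma dotp_delta v i : dotp v (delta_mx ord0 i) = v ord0 i.
Proof.
rewrite /dotp (bigD1 i) //= big1 ?addr0; first by rewrite mxE !eqxx mulr1.
by move=> j /negbTE ji; rewrite mxE ji andbF mulr0.
Qed.

Lemma dotp_sq x h : dotp (x + h) (x + h) = dotp x x + 2 * dotp x h + dotp h h.
Proof. rewrite !dotpDl !dotpDr (dotpC h x); ring. Qed.

Lemma entry_le_norm h i : `|h ord0 i| <= `|h|.
Proof.
have /mapP[j Hj ->] : `|h ord0 i| \in [seq `|h x.1 x.2| | x : 'I_1 * 'I_n].
  by apply/mapP; exists (ord0, i) => //=; rewrite mem_enum.
by rewrite [leRHS]/Num.norm /= mx_normrE; apply/bigmax_geP; right => /=; exists j.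
Qed.

Lemma dotp_le_norm h : dotp h h <= n%:R * `|h| ^+ 2.
Proof.
have -> : n%:R * `|h| ^+ 2 = \sum_(i < n) `|h| ^+ 2.
  by rewrite sumr_const card_ord mulr_natl.
rewrite /dotp; apply: ler_sum => i _.
rewrite -expr2 -real_normK ?num_real //; rewrite lerXn2r ?nnegrE //.
exact: entry_le_norm.
Qed.

Lemma dotp_bound v h : `|dotp v h| <= (\sum_i `|v ord0 i|) * `|h|.
Proof.
rewrite mulr_suml; apply: le_trans (ler_norm_sum _ _ _) _; apply: ler_sum => i _.
by rewrite normrM ler_wpM2l // entry_le_norm.
Qed.

End Helpers.

Set Implicit Arguments. Unset Strict Implicit.
Section H2.
Variables (R : realType) (n : nat).
Implicit Types (x y z v w h : 'rV[R]_n).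

Lemma prox_fenchel (L : R) (g : 'rV[R]_n -> R) x v : 0 < L ->
  prox_subdiff L^-1 g x v <->
  fenchel_subdiff (fun z => L * jhalf z + g z) x (v + L *: x).
Proof.
move=> L0; have E : (2 * L^-1)^-1 = L / 2 by rewrite invfM invrK mulrC.
have E2 : forall p a q : R, L * ((p + 2 * a + q) / 2) = L * (p / 2) + L * a + L / 2 * q.
  by move=> p a q; field.
rewrite /prox_subdiff /fenchel_subdiff /= E /jhalf.
split=> H y; have [h ->] : exists h, y = h + x by exists (y - x); rewrite subrK.
  move: (H (h + x)); rewrite addrK (addrC h x) dotp_sq E2 dotpDl dotpZl; lra.
move: (H (h + x)); rewrite addrK (addrC h x) dotp_sq E2 dotpDl dotpZl; lra.
Qed.

Lemma diff_of (V W : normedModType R) (g : V -> W) (d : {linear V -> W}) (x : V) :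
  continuous d -> g \o shift x = cst (g x) + d +o_ 0 id ->
  differentiable g x /\ 'd g x = d :> (V -> W).
Proof.
move=> c o; have E := diff_unique c o; split => //.
by apply/diff_locallyP; rewrite E; split.
Qed.

Lemma quad_diff (f : 'rV[R]_n -> R) x v (K : R) : 0 <= K ->
  (forall h, `|f (h + x) - f x - dotp v h| <= K * dotp h h) ->
  differentiable f x /\ grad f x = v.
Proof.
move=> K0 Hq.
pose df := fun h => dotp v h.
have lin : linear df by move=> a u w; rewrite /df dotpDr dotpZr.
pose dfL : {linear 'rV[R]_n -> R} := HB.pack df (GRing.isLinear.Build _ _ _ _ _ lin).
have cont : continuous dfL.
  apply: bounded_linear_continuous; apply/linear_boundedP.
  near=> r. move=> h; change (`|dotp v h| <= r * `|h|); apply: le_trans (dotp_bound v h) _; apply: ler_wpM2r => //.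
have [dif dfE] : differentiable f x /\ 'd f x = dfL :> ('rV[R]_n -> R).
  apply: diff_of => //.
  apply/eqaddoP => eps eps0.
  have c0 : 0 < K * n%:R + 1 by rewrite ltr_wpDl // mulr_ge0.
  near=> h.
  rewrite /= opprD addrA.
  apply: le_trans (Hq h) _.
  apply: le_trans (_ : K * (n%:R * `|h| ^+ 2) <= _).
    by rewrite ler_wpM2l // dotp_le_norm.
  rewrite mulrA expr2 mulrA ler_wpM2r //.
  have hlt : `|h| < eps / (K * n%:R + 1).
    near: h. rewrite !nbhs_simpl.
    have H0 := @nbhs0_lt R 'rV[R]_n _ (divr_gt0 eps0 c0).
    apply: filterS H0. by move=> y.
  apply: le_trans (_ : (K * n%:R + 1) * `|h| <= _).
    by rewrite ler_wpM2r // lerDl.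
  by rewrite mulrC -ler_pdivlMr // ltW.
split => //.
by apply/rowP => i; rewrite mxE dfE /= /df dotp_delta.
Unshelve. all: by end_near.
Qed.

End H2.

Set Implicit Arguments. Unset Strict Implicit.
Section H3.
Variables (R : realType) (n : nat).
Implicit Types (x y z v w h : 'rV[R]_n).

Lemma inv2L (L : R) : (2 * L^-1)^-1 = L / 2.
Proof. by rewrite invfM invrK mulrC. Qed.

Lemma prox_pair (L : R) (f : 'rV[R]_n -> R) x v w : 0 < L ->
  prox_subdiff L^-1 f x v -> prox_subdiff L^-1 (fun z => - f z) x w ->
  forall h, `|f (h + x) - f x - dotp v h| <= L / 2 * dotp h h.
Proof.
move=> L0; rewrite /prox_subdiff /= inv2L => Hv Hw.
set u := v + w.
have u0 : u = 0.
  apply: dotp_eq0; apply/eqP; rewrite eq_le dotp_ge0 andbT.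
  pose t := (2 * L)^-1.
  have := Hv (t *: u + x); have := Hw (t *: u + x); rewrite addrK !dotpZr !dotpZl.
  have -> : dotp v u = dotp u u - dotp w u by rewrite /u dotpDl; ring.
  move=> h1 h2.
  have : t * dotp u u - 2 * (L / 2 * (t * (t * dotp u u))) <= 0 by lra.
  have -> : t * dotp u u - 2 * (L / 2 * (t * (t * dotp u u))) = dotp u u * (4 * L)^-1.
    by rewrite /t; field; rewrite lt0r_neq0.
  by rewrite pmulr_lle0 // invr_gt0 mulr_gt0.
have wE : w = - v by apply/eqP; rewrite -addr_eq0 addrC -/u u0.
move=> h; have := Hv (h + x); have := Hw (h + x); rewrite addrK wE dotpNl => h1 h2.
rewrite ler_norml; apply/andP; split; lra.
Qed.

Lemma lip_alg (L dd dh hh s : R) : 0 < L -> s = - (2 * L)^-1 ->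
  - dh - 2 * (s * (dd + L * dh)) <=
    L * (hh + 2 * (s * (dh + L * hh)) + s ^+ 2 * (dd + 2 * L * dh + L ^+ 2 * hh)
         + s ^+ 2 * (dd + 2 * L * dh + L ^+ 2 * hh)) ->
  dd <= L ^+ 2 * hh.
Proof.
move=> L0 sE H.
have key : L * (hh + 2 * (s * (dh + L * hh)) + s ^+ 2 * (dd + 2 * L * dh + L ^+ 2 * hh)
         + s ^+ 2 * (dd + 2 * L * dh + L ^+ 2 * hh)) - (- dh - 2 * (s * (dd + L * dh)))
   = (L ^+ 2 * hh - dd) / (2 * L).
  by rewrite sE; field; rewrite lt0r_neq0.
have : 0 <= (L ^+ 2 * hh - dd) / (2 * L) by rewrite -key subr_ge0.
by rewrite pmulr_lge0 ?subr_ge0 // invr_gt0 mulr_gt0.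
Qed.

Lemma dotp_comb (s L : R) (p q : 'rV[R]_n) :
  dotp (s *: (p + L *: q)) (s *: (p + L *: q)) =
  s ^+ 2 * (dotp p p + 2 * L * dotp p q + L ^+ 2 * dotp q q).
Proof. rewrite dotpZr dotpZl !dotpDr !dotpDl !dotpZr !dotpZl (dotpC q p); ring. Qed.

Lemma lip_vec (L : R) (f : 'rV[R]_n -> R) x y a b : 0 < L ->
  (forall z, `|f z - f x - dotp a (z - x)| <= L / 2 * dotp (z - x) (z - x)) ->
  (forall z, `|f z - f y - dotp b (z - y)| <= L / 2 * dotp (z - y) (z - y)) ->
  enorm (a - b) <= L * enorm (x - y).
Proof.
move=> L0 Hx Hy.
set d := b - a; set h := y - x; set s := - (2 * L)^-1.
set w := s *: (d + L *: h).
have E1 : y + w - x = h + w by rewrite /h addrAC.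
have E2 : y + w - y = w by rewrite addrC addKr.
have E3 : x - w - y = - (h + w) by rewrite /h opprD opprB addrAC.
have E4 : x - w - x = - w by rewrite addrC addKr.
have := Hx (y + w); have := Hy (y + w); have := Hy (x - w); have := Hx (x - w).
rewrite E1 E2 E3 E4 !dotpNl !dotpNr !opprK !ler_norml.
move=> /andP[h1 h2] /andP[h3 h4] /andP[h5 h6] /andP[h7 h8].
have S : - dotp d h - 2 * dotp d w <= L * (dotp (h + w) (h + w) + dotp w w).
  have Ea : dotp a h - dotp b h = - dotp d h by rewrite /d dotpBl; ring.
  have Eb : dotp a w - dotp b w = - dotp d w by rewrite /d dotpBl; ring.
  have Ea' : dotp a (h + w) = dotp a h + dotp a w by rewrite dotpDr.
  have Eb' : dotp b (h + w) = dotp b h + dotp b w by rewrite dotpDr.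
  lra.
have Ew1 : dotp d w = s * (dotp d d + L * dotp d h) by rewrite /w dotpZr dotpDr dotpZr.
have Ew2 : dotp h w = s * (dotp d h + L * dotp h h).
  by rewrite /w dotpZr dotpDr dotpZr (dotpC h d).
have Ew3 : dotp w w = s ^+ 2 * (dotp d d + 2 * L * dotp d h + L ^+ 2 * dotp h h).
  exact: dotp_comb.
rewrite dotp_sq Ew2 Ew3 Ew1 in S.
have key := @lip_alg L _ _ _ s L0 erefl S.
rewrite /enorm.
have -> : dotp (a - b) (a - b) = dotp d d by rewrite /d -opprB dotpNl dotpNr opprK.
have -> : dotp (x - y) (x - y) = dotp h h by rewrite /h -opprB dotpNl dotpNr opprK.
rewrite -(ger0_norm (ltW L0)) -sqrtr_sqr -sqrtrM ?sqr_ge0 //.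
by rewrite ler_wsqrtr.
Qed.

End H3.

Theorem mainTheorem13 (R : realType) (n : nat) (f : 'rV[R]_n -> R)
  (U : set 'rV[R]_n) (L : R) :
  U !=set0 -> open U -> convex_rV U ->
  prox_bounded f -> prox_bounded (fun z => (- f z)%R) ->
  0 < L ->
  ((L^-1)%:E < prox_threshold f)%E ->
  ((L^-1)%:E < prox_threshold (fun z => (- f z)%R))%E ->
  let A := forall x, U x ->
      prox_subdiff L^-1 f x !=set0 /\ prox_subdiff L^-1 (fun z => (- f z)%R) x !=set0 in
  let B := forall x, U x ->
      fenchel_subdiff (fun z => (L * jhalf z + f z)%R) x !=set0 /\
      fenchel_subdiff (fun z => (L * jhalf z - f z)%R) x !=set0 in
  let C := (forall x, U x -> differentiable f x) /\
      (forall x y, U x ->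
         `| f y - f x - dotp (grad f x) (y - x) | <= L / 2 * dotp (y - x) (y - x)) in
  (A <-> B) /\ (B <-> C) /\
  (A \/ B \/ C -> forall x y, U x -> U y -> enorm (grad f x - grad f y) <= L * enorm (x - y)).
Proof.
move=> _ _ _ _ _ L0 _ _ A B C.
have AB : A <-> B.
  split=> H x Ux; have [[v Hv] [w Hw]] := H x Ux; split.
  - by exists (v + L *: x); apply/prox_fenchel.
  - by exists (w + L *: x); apply/(@prox_fenchel _ _ L (fun z => - f z)).
  - by exists (v - L *: x); apply/(@prox_fenchel _ _ L (f)) => //; rewrite subrK.
  - by exists (w - L *: x); apply/(@prox_fenchel _ _ L (fun z => - f z)) => //; rewrite subrK.
have CA : C -> A.
  move=> [_ Hb] x Ux; split; [exists (grad f x) | exists (- grad f x)] => y;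
    have := Hb x y Ux; rewrite inv2L ler_norml => /andP[h1 h2] /=;
    rewrite ?dotpNl; lra.
have AC : A -> C.
  move=> H.
  have Q : forall x, U x -> differentiable f x /\
      forall h, `|f (h + x) - f x - dotp (grad f x) h| <= L / 2 * dotp h h.
    move=> x Ux; have [[v Hv] [w Hw]] := H x Ux.
    have Hq := prox_pair L0 Hv Hw.
    have K0 : 0 <= L / 2 by rewrite divr_ge0 // ltW.
    have [d g] := quad_diff K0 Hq.
    by split => //; rewrite g.
  split; first by move=> x /Q [].
  move=> x y Ux; have [_ Hb] := Q x Ux; have := Hb (y - x); rewrite subrK; exact.
split => //; split.
  split; [by move=> /AB/AC | by move=> /CA/AB].
move=> HH; have [_ Hb] : C by case: HH => [/AC | [/AB/AC | //]].
move=> x y Ux Uy.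
exact: (lip_vec L0 (fun z => Hb x z Ux) (fun z => Hb y z Uy)).
Qed.
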